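(* Let $(E \xrightarrow{Q} K,\gamma)$ be a projected cone with dual projected cone $(F\xrightarrow{P} N,\delta)$, and let $L := \ker(P)$. Let $\gamma_1,\gamma_2\preceq\gamma$ be faces and $\delta_i := \gamma_i^{*}$. Then the following are equivalent: (i) there is an $L$-invariant separating linear form for $\delta_1$ and $\delta_2$; (ii) $Q(\gamma_1)^{\circ}\cap Q(\gamma_2)^{\circ}\neq\emptyset$.
   Context: Lattices are finitely generated free abelian groups, $E_{\mathbb Q}:=\mathbb Q\otimes E$; cones are convex polyhedral cones, $\tau^\circ$ denotes relative interior, $\preceq$ the face relation, $\sigma^\perp$ and $\sigma^\vee$ the orthogonal space and dual cone in the dual vector space. A projected cone $(E\xrightarrow{Q}K,\gamma)$ is a surjective lattice homomorphism $Q\colon E\to K$ with a simplicial full-dimensional cone $\gamma\subset E_{\mathbb Q}$. Its dual projected cone $(F\xrightarrow{P}N,\delta)$ is defined by $M:=\ker Q$, $F:=\mathrm{Hom}(E,\mathbb Z)$, $N:=\mathrm{Hom}(M,\mathbb Z)$, $P\colon F\to N$ the restriction map, and $\delta:=\gamma^\vee\subset F_{\mathbb Q}$ (so $0\to\mathrm{Hom}(K,\mathbb Z)\to F\xrightarrow{P} N\to 0$ is exact; note $P$ is not the dual of $Q$). For a face $\gamma_0\preceq\gamma$ put $\gamma_0^{*}:=\gamma_0^\perp\cap\delta$ (this is an order-reversing bijection between faces of $\gamma$ and of $\delta$). An $L$-invariant linear form is an element $u\in E=\mathrm{Hom}(F,\mathbb Z)$ with $L\subset u^\perp$. A separating linear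 form for cones $\delta_1,\delta_2$ is a $u$ with $u|_{\delta_1}\ge 0$, $u|_{\delta_2}\le 0$ and $u^\perp\cap\delta_1=u^\perp\cap\delta_2=\delta_1\cap\delta_2$. *)

(* Defs.v *)
(* Lattices are modelled by coordinates: E = Z^n (row vectors),
   F = Hom(E,Z) = Z^n via the dual basis, K = Z^k. *)
From mathcomp Require Import all_boot all_order all_algebra.
Set Implicit Arguments. Unset Strict Implicit. Unset Printing Implicit Defensive.
Import Order.TTheory GRing.Theory Num.Theory.
Local Open Scope ring_scope.

Definition vset (n : nat) := 'rV[rat]_n -> Prop.

Definition toQ (m n : nat) (A : 'M[int]_(m, n)) : 'M[rat]_(m, n) :=
  map_mx (fun z : int => z%:~R) A.

(* pairing  F_Q x E_Q -> Q  (dual bases) *)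
Definition dot (n : nat) (f x : 'rV[rat]_n) : rat := \sum_(i < n) f 0 i * x 0 i.

Definition cone_gen (m n : nat) (G : 'M[rat]_(m, n)) : vset n :=
  fun x => exists c : 'rV[rat]_m, (forall i, 0 <= c 0 i) /\ x = c *m G.

Definition simplicial_fulldim (n : nat) (g : vset n) : Prop :=
  exists G : 'M[rat]_n, G \in unitmx /\ forall x, g x <-> cone_gen G x.

Definition dual_cone (n : nat) (s : vset n) : vset n :=
  fun f => forall x, s x -> 0 <= dot f x.
Definition orth (n : nat) (s : vset n) : vset n :=
  fun f => forall x, s x -> dot f x = 0.

Definition is_face (n : nat) (tau sigma : vset n) : Prop :=
  exists w, dual_cone sigma w /\ forall x, tau x <-> (sigma x /\ dot w x = 0).

Definition face_star (n : nat) (gamma g0 : vset n) : vset n :=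
  fun f => orth g0 f /\ dual_cone gamma f.

Definition img (n k : nat) (Qm : 'M[int]_(n, k)) (s : vset n) : vset k :=
  fun y => exists x, s x /\ y = x *m toQ Qm.

Definition lspan (n : nat) (s : vset n) : vset n :=
  fun z => exists (m : nat) (V : 'M[rat]_(m, n)) (c : 'rV[rat]_m),
    (forall i, s (row i V)) /\ z = c *m V.

(* relative interior (interior within the linear span = affine hull of a cone,
   w.r.t. the sup-norm topology) *)
Definition relint (n : nat) (s : vset n) : vset n :=
  fun x => s x /\ exists eps : rat, 0 < eps /\
    forall z, lspan s z -> (forall i, `|z 0 i - x 0 i| < eps) -> s z.

(* L = ker P, P : F -> N = Hom(ker Q, Z) the restriction map *)
Definition kerP (n k : nat) (Qm : 'M[int]_(n, k)) : 'rV[int]_n -> Prop :=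
  fun f => forall m : 'rV[int]_n, m *m Qm = 0 -> dot (toQ f) (toQ m) = 0.

(* u in E is L-invariant : L ⊂ u^perp *)
Definition L_invariant (n k : nat) (Qm : 'M[int]_(n, k)) (u : 'rV[int]_n) : Prop :=
  forall f, kerP Qm f -> dot (toQ f) (toQ u) = 0.

Definition separating (n : nat) (u : 'rV[rat]_n) (d1 d2 : vset n) : Prop :=
  (forall f, d1 f -> 0 <= dot f u) /\ (forall f, d2 f -> dot f u <= 0) /\
  (forall f, (dot f u = 0 /\ d1 f) <-> (d1 f /\ d2 f)) /\
  (forall f, (dot f u = 0 /\ d2 f) <-> (d1 f /\ d2 f)).

(* Main.v *)
Require Import Defs.
From mathcomp Require Import all_boot all_order all_algebra.
From mathcomp Require Import ring lra.
Set Implicit Arguments. Unset Strict Implicit. Unset Printing Implicit Defensive.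
Import Order.TTheory GRing.Theory Num.Theory.
Local Open Scope ring_scope.

Lemma dot_mulmx n m (f : 'rV[rat]_n) (c : 'rV[rat]_m) (G : 'M[rat]_(m,n)) :
  dot f (c *m G) = \sum_i c 0 i * dot f (row i G).
Proof.
rewrite /dot. under eq_bigr do rewrite mxE mulr_sumr.
rewrite exchange_big /=. apply: eq_bigr => i _. rewrite mulr_sumr.
apply: eq_bigr => j _. by rewrite !mxE mulrCA.
Qed.

Lemma dot_row n m (f : 'rV[rat]_n) (G : 'M[rat]_(m,n)) i :
  dot f (row i G) = (f *m G^T) 0 i.
Proof. rewrite /dot mxE; apply: eq_bigr => j _; by rewrite !mxE. Qed.

Lemma dotC n (f x : 'rV[rat]_n) : dot f x = dot x f.
Proof. rewrite /dot; apply: eq_bigr => j _; by rewrite mulrC. Qed.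

Lemma dot_delta n (i : 'I_n) (a : 'rV[rat]_n) : dot (delta_mx 0 i) a = a 0 i.
Proof.
rewrite /dot (bigD1 i) //= big1 ?addr0; first by rewrite mxE !eqxx mul1r.
by move=> j /negPf ji; rewrite mxE ji andbF mul0r.
Qed.

Lemma dotZr n (f x : 'rV[rat]_n) d : dot f (d *: x) = d * dot f x.
Proof. rewrite /dot mulr_sumr; apply: eq_bigr => j _; by rewrite mxE mulrCA. Qed.

Definition mask n (I : pred 'I_n) (b : 'rV[rat]_n) : 'rV[rat]_n :=
  \row_i (if I i then b 0 i else 0).
Definition maskmx n k (I : pred 'I_n) (V : 'M[rat]_(n,k)) : 'M[rat]_(n,k) :=
  \matrix_(i, j) (if I i then V i j else 0).

Lemma mask_mul n k (I : pred 'I_n) (b : 'rV[rat]_n) (V : 'M[rat]_(n,k)) :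
  b *m maskmx I V = mask I b *m V.
Proof.
apply/rowP => j; rewrite !mxE; apply: eq_bigr => i _; rewrite !mxE.
by case: (I i); rewrite ?mulr0 ?mul0r.
Qed.
Lemma le_sum_term (I : finType) (F : I -> rat) i :
  (forall j, 0 <= F j) -> F i <= \sum_j F j.
Proof. by move=> h; rewrite (bigD1 i) //= lerDl sumr_ge0. Qed.

Lemma pos_lb n (b : 'rV[rat]_n) : (forall i, 0 < b 0 i) ->
  exists beta : rat, 0 < beta /\ forall i, beta <= b 0 i.
Proof.
move=> hb; set S := \sum_i (b 0 i)^-1.
have S0 : 0 <= S by apply: sumr_ge0 => i _; rewrite invr_ge0 ltW.
exists (1 / (1 + S)); split; first by rewrite divr_gt0 // ltr_wpDr.
move=> i; rewrite ler_pdivrMr ?ltr_wpDr //.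
have h1 : (b 0 i)^-1 <= 1 + S.
  have h2 := @le_sum_term _ (fun j => (b 0 j)^-1) i. apply: (le_trans (h2 _)).
    by move=> j; rewrite invr_ge0 ltW.
  by rewrite lerDr.
rewrite -(ler_pM2l (hb i)) divff ?lt0r_neq0 // in h1.
Qed.
Lemma relint_to n k (s : vset k) (W : 'M[rat]_(n,k))
  (hs : forall y, s y <-> exists b : 'rV[rat]_n, (forall i, 0 <= b 0 i) /\ y = b *m W) y :
  relint s y -> exists b : 'rV[rat]_n, (forall i, 0 < b 0 i) /\ y = b *m W.
Proof.
case=> sy [eps [eps0 H]].
set s1 : 'rV[rat]_k := const_mx 1 *m W.
have s1s : s s1 by apply/hs; exists (const_mx 1); split=> // i; rewrite mxE.
set T := 1 + \sum_j `|s1 0 j|.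
have T0 : 0 < T by rewrite ltr_wpDr // sumr_ge0.
set tau := eps / T.
have tau0 : 0 < tau by rewrite divr_gt0.
set z := y - tau *: s1.
have lz : lspan s z.
  exists 2, (\matrix_(i < 2, j < k) if i == 0 then y 0 j else s1 0 j),
    (\row_(i < 2) if i == 0 then 1 else - tau); split.
    move=> i; have -> : row i (\matrix_(i < 2, j < k) if i == 0 then y 0 j else s1 0 j)
      = if i == 0 then y else s1.
      by apply/rowP => j; rewrite !mxE; case: (i == 0); rewrite // !mxE.
    by case: (i == 0).
  apply/rowP => j; rewrite !mxE big_ord_recl big_ord1 !mxE /=.
  by rewrite mul1r mulNr.
have sz : s z.
  have hz : forall j, z 0 j - y 0 j = - (tau * s1 0 j).
    by move=> j; rewrite /z !mxE addrAC subrr add0r.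
  apply: (H z lz) => j; rewrite hz normrN normrM (gtr0_norm tau0).
  apply: (@le_lt_trans _ _ (tau * \sum_j `|s1 0 j|)).
    by rewrite ler_pM2l // (@le_sum_term _ (fun j => `|s1 0 j|) j).
  rewrite /tau /T mulrAC ltr_pdivrMr // ltr_pM2l //; lra.
case/hs: sz => c [c0 zc].
exists (c + tau *: const_mx 1); split.
  by move=> i; rewrite !mxE mulr1; apply: ltr_wpDl.
by rewrite mulmxDl -scalemxAl -/s1 -zc /z subrK.
Qed.

Lemma relint_from n k (s : vset k) (W : 'M[rat]_(n,k))
  (hs : forall y, s y <-> exists b : 'rV[rat]_n, (forall i, 0 <= b 0 i) /\ y = b *m W) y :
  (exists b : 'rV[rat]_n, (forall i, 0 < b 0 i) /\ y = b *m W) -> relint s y.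
Proof.
case=> b [bpos ->].
split; first by apply/hs; exists b; split=> // i; exact: ltW.
have [beta [beta0 hbeta]] := pos_lb bpos.
set P := pinvmx W.
set M := 1 + \sum_i \sum_j `|P j i|.
have S0 : 0 <= \sum_i \sum_j `|P j i| by apply: sumr_ge0 => i _; apply: sumr_ge0.
have M0 : 0 < M by rewrite ltr_wpDr.
exists (beta / M); split; first by rewrite divr_gt0.
move=> z lz hz.
have zW : (z <= W)%MS.
  case: lz => m [V [c [hV ->]]].
  apply: submx_trans (submxMl c V) _.
  apply/row_subP => i; case/hs: (hV i) => b' [_ ->]; exact: submxMl.
set d := z - b *m W.
have dW : (d <= W)%MS.
  by rewrite /d addmx_sub // -mulNmx submxMl.
set e := d *m P.
have de : d = e *m W by rewrite /e mulmxKpV.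
have he : forall i, `|e 0 i| < beta.
  move=> i; rewrite /e mxE.
  apply: (le_lt_trans (ler_norm_sum _ _ _)).
  apply: (@le_lt_trans _ _ (\sum_j (beta / M) * `|P j i|)).
    apply: ler_sum => j _; rewrite normrM ler_wpM2r // ltW //.
    by move: (hz j); rewrite /d !mxE.
  rewrite -mulr_sumr.
  have h1 := @le_sum_term _ (fun i => \sum_j `|P j i|) i.
  have h2 : \sum_j `|P j i| <= \sum_i \sum_j `|P j i|.
    by apply: h1 => j; apply: sumr_ge0.
  rewrite mulrAC ltr_pdivrMr // ltr_pM2l // /M; lra.
apply/hs; exists (b + e); split.
  move=> i; rewrite mxE; have := he i; have := hbeta i; rewrite ltr_norml.
  move=> h1 /andP[h2 h3]; lra.
by rewrite mulmxDl -de /d addrC subrK.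
Qed.

Lemma gi_in n (gamma : vset n) (G : 'M[rat]_n)
  (hG : forall x, gamma x <-> cone_gen G x) i : gamma (row i G).
Proof. by apply/hG; exists (delta_mx 0 i); split; [move=> j; rewrite mxE ler0n | rewrite rowE]. Qed.

Lemma face_char n (gamma g1 : vset n) (G : 'M[rat]_n) w
  (hG : forall x, gamma x <-> cone_gen G x) (dw : dual_cone gamma w)
  (e : forall x, g1 x <-> gamma x /\ dot w x = 0) x :
  g1 x <-> exists c : 'rV[rat]_n, (forall i, 0 <= c 0 i) /\
     x = mask (fun i => dot w (row i G) == 0) c *m G.
Proof.
split.
  case/e => /hG [c [c0 ->]] hw; exists c; split=> //; congr (_ *m G).
  apply/rowP => i; rewrite mxE; case: ifP => // /negbT hi.
  rewrite dot_mulmx in hw.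
  have tn : forall j, 0 <= c 0 j * dot w (row j G).
    by move=> j; rewrite mulr_ge0 // dw //; apply: gi_in.
  have := psumr_eq0P (fun j _ => tn j) hw (i := i) isT.
  by move/eqP; rewrite mulf_eq0 (negPf hi) orbF => /eqP.
case=> c [c0 ->]; apply/e; split.
  apply/hG; exists (mask (fun i => dot w (row i G) == 0) c); split=> //.
  by move=> i; rewrite mxE; case: ifP.
rewrite dot_mulmx big1 // => i _; rewrite mxE; case: ifP => [/eqP -> | _].
  by rewrite mulr0.
by rewrite mul0r.
Qed.

Lemma star_char n (gamma g1 : vset n) (G : 'M[rat]_n) w
  (hG : forall x, gamma x <-> cone_gen G x) (dw : dual_cone gamma w)
  (e : forall x, g1 x <-> gamma x /\ dot w x = 0) f :
  face_star gamma g1 f <-> (forall i, 0 <= dot f (row i G)) /\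
     (forall i, dot w (row i G) == 0 -> dot f (row i G) = 0).
Proof.
split.
  case=> ho hd; split; first by move=> i; apply: hd; apply: gi_in.
  by move=> i /eqP hi; apply: ho; apply/e; split=> //; apply: gi_in.
case=> t0 t1; split.
  move=> x /(face_char hG dw e) [c [c0 ->]].
  rewrite dot_mulmx big1 // => i _; rewrite mxE; case: ifP => [hi | _].
    by rewrite t1 // mulr0.
  by rewrite mul0r.
move=> x /hG [c [c0 ->]]; rewrite dot_mulmx; apply: sumr_ge0 => i _.
exact: mulr_ge0.
Qed.

Lemma img_char n k (Qm : 'M[int]_(n,k)) (gamma g1 : vset n) (G : 'M[rat]_n) w
  (hG : forall x, gamma x <-> cone_gen G x) (dw : dual_cone gamma w)
  (e : forall x, g1 x <-> gamma x /\ dot w x = 0) y :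
  img Qm g1 y <-> exists b : 'rV[rat]_n, (forall i, 0 <= b 0 i) /\
     y = b *m maskmx (fun i => dot w (row i G) == 0) (G *m toQ Qm).
Proof.
split.
  case=> x [/(face_char hG dw e) [c [c0 ->]] ->].
  by exists c; split=> //; rewrite mask_mul mulmxA.
case=> b [b0 ->]; exists (mask (fun i => dot w (row i G) == 0) b *m G); split.
  by apply/(face_char hG dw e); exists b.
by rewrite mask_mul mulmxA.
Qed.

Lemma sign_lemma n (I1 I2 : pred 'I_n) (a t : 'I_n -> rat)
 (ha0 : forall i, ~~ I1 i -> ~~ I2 i -> a i = 0)
 (ha1 : forall i, ~~ I1 i -> 0 <= a i)
 (ha2 : forall i, ~~ I1 i -> I2 i -> 0 < a i)
 (t0 : forall i, 0 <= t i) (t1 : forall i, I1 i -> t i = 0) :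
 0 <= \sum_i a i * t i /\ (\sum_i a i * t i = 0 <-> forall i, I2 i -> t i = 0).
Proof.
have tn : forall i, 0 <= a i * t i.
  by move=> i; case: (boolP (I1 i)) => h; [rewrite t1 // mulr0 | rewrite mulr_ge0 // ha1].
split; first by apply: sumr_ge0.
split.
  move=> hs i hi; have := psumr_eq0P (fun i _ => tn i) hs (i:=i) isT.
  case: (boolP (I1 i)) => h1; first by rewrite t1.
  move/eqP; rewrite mulf_eq0 => /orP [/eqP ha | /eqP //].
  by have := ha2 _ h1 hi; rewrite ha ltxx.
move=> h; apply: big1 => i _; case: (boolP (I1 i)) => h1; first by rewrite t1 // mulr0.
case: (boolP (I2 i)) => h2; first by rewrite h // mulr0.
by rewrite ha0 // mul0r.
Qed.

Lemma int_scale n (v : 'rV[rat]_n) :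
  exists d : rat, 0 < d /\ exists w : 'rV[int]_n, toQ w = d *: v.
Proof.
exists ((\prod_i denq (v 0 i))%:~R); split.
  by rewrite ltr0z; apply: prodr_gt0 => i _; apply: denq_gt0.
exists (\row_i (numq (v 0 i) * \prod_(j | j != i) denq (v 0 j))).
apply/rowP => i; rewrite !mxE /=; apply: etrans; first exact: intrM.
by rewrite numqE [in RHS](bigD1 i) //= -mulrA -intrM mulrC.
Qed.

Lemma fi_props n (gamma g1 : vset n) (G : 'M[rat]_n) w (Gu : G \in unitmx)
  (hG : forall x, gamma x <-> cone_gen G x) (dw : dual_cone gamma w)
  (e : forall x, g1 x <-> gamma x /\ dot w x = 0) (a : 'rV[rat]_n) i :
  (face_star gamma g1 (delta_mx 0 i *m invmx G^T) <-> ~~ (dot w (row i G) == 0)) /\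
  dot (delta_mx 0 i *m invmx G^T) (a *m G) = a 0 i.
Proof.
have ft : forall j, dot (delta_mx 0 i *m invmx G^T) (row j G) = (delta_mx 0 i : 'rV[rat]_n) 0 j.
  by move=> j; rewrite dot_row mulmxKV // unitmx_tr.
split.
  rewrite (star_char hG dw e); split.
    case=> _ h; apply/negP => hi; have := h i hi; rewrite ft mxE !eqxx /=.
    by move/eqP; rewrite oner_eq0.
  move=> hi; split; first by move=> j; rewrite ft mxE ler0n.
  move=> j hj; rewrite ft mxE eqxx /=; case: eqP => // ji.
  by move: hi; rewrite -ji hj.
rewrite dot_mulmx; under eq_bigr do rewrite ft.
rewrite -(dot_delta i a) dotC; apply: eq_bigr => j _; by rewrite mulrC.
Qed.

Ltac spec := repeat match goal with
  | H : is_true true -> _ |- _ => specialize (H isT)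
  | H : true = true -> _ |- _ => specialize (H erefl) end.

Unset Implicit Arguments.
Set Strict Implicit.

Theorem lemma3p3 (n k : nat) (Qm : 'M[int]_(n, k))
  (hQ : forall y : 'rV[int]_k, exists x : 'rV[int]_n, x *m Qm = y)
  (gamma : vset n) (hgamma : simplicial_fulldim gamma)
  (gamma1 gamma2 : vset n) (h1 : is_face gamma1 gamma) (h2 : is_face gamma2 gamma) :
  (exists u : 'rV[int]_n, L_invariant Qm u /\
     separating (toQ u) (face_star gamma gamma1) (face_star gamma gamma2))
  <->
  (exists y : 'rV[rat]_k, relint (img Qm gamma1) y /\ relint (img Qm gamma2) y).
Proof.
case: hgamma => G [Gu hG].
case: h1 => w1 [dw1 e1]; case: h2 => w2 [dw2 e2].
set I1 := fun i => dot w1 (row i G) == 0.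
set I2 := fun i => dot w2 (row i G) == 0.
set V := G *m toQ Qm.
have ic1 := img_char Qm hG dw1 e1.
have ic2 := img_char Qm hG dw2 e2.
have sc1 := star_char hG dw1 e1.
have sc2 := star_char hG dw2 e2.
split.
- case=> u [Li [s1 [s2 [s3 s4]]]].
  have uQ0 : toQ u *m toQ Qm = 0.
    apply/rowP => j; rewrite [RHS]mxE.
    have kf : kerP Qm (\row_i Qm i j).
      move=> m mQ.
      have -> : dot (toQ (\row_i Qm i j)) (toQ m) = ((m *m Qm) 0 j)%:~R.
        rewrite mxE rmorph_sum; apply: eq_bigr => i _; rewrite !mxE rmorphM mulrC.
        done.
      by rewrite mQ mxE.
    rewrite -(Li _ kf) /dot mxE; apply: eq_bigr => i _; rewrite !mxE mulrC.
    done.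
  have [a aG] : exists a, a *m G = toQ u by exists (toQ u *m invmx G); rewrite mulmxKV.
  have aV : a *m V = 0 by rewrite /V mulmxA aG uQ0.
  have fp1 := fi_props Gu hG dw1 e1 a.
  have fp2 := fi_props Gu hG dw2 e2 a.
  have A1 : forall i, ~~ I1 i -> 0 <= a 0 i.
    move=> i hi; have [[_ m] d] := fp1 i; rewrite -d aG; apply: s1; exact: m.
  have A2 : forall i, ~~ I2 i -> a 0 i <= 0.
    move=> i hi; have [[_ m] d] := fp2 i; rewrite -d aG; apply: s2; exact: m.
  have A3 : forall i, ~~ I1 i -> I2 i -> 0 < a 0 i.
    move=> i hi hi2; rewrite lt_def A1 // andbT; apply/eqP => a0.
    have [[_ m1] d] := fp1 i; have [[m2 _] _] := fp2 i.
    have h0 : dot (delta_mx 0 i *m invmx G^T) (toQ u) = 0 by rewrite -aG d.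
    have := (proj1 (s3 _) (conj h0 (m1 hi))).2.
    by move/m2/negP/(_ hi2).
  have A4 : forall i, ~~ I2 i -> I1 i -> a 0 i < 0.
    move=> i hi hi1; rewrite lt_neqAle A2 // andbT; apply/eqP => a0.
    have [[m1 _] _] := fp1 i; have [[_ m2] d] := fp2 i.
    have h0 : dot (delta_mx 0 i *m invmx G^T) (toQ u) = 0 by rewrite -aG d.
    have := (proj1 (s4 _) (conj h0 (m2 hi))).1.
    by move/m1/negP/(_ hi1).
  set b' := \row_i (if I1 i then (if I2 i then 1 + `|a 0 i| else - a 0 i) else 1) : 'rV[rat]_n.
  set c' := \row_i (if I2 i then (mask I1 b') 0 i + a 0 i else 1) : 'rV[rat]_n.
  have mc : mask I2 c' = mask I1 b' + a.
    apply/rowP => i; rewrite !mxE.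
    move: (A1 i) (A2 i) (A3 i) (A4 i); case: (I1 i); case: (I2 i) => //= B1 B2 B3 B4; spec.
    - by rewrite addNr.
    - lra.
  exists (mask I1 b' *m V); split.
    apply: (relint_from ic1); exists b'; split; last by rewrite mask_mul.
    move=> i; rewrite mxE; move: (A4 i); case: (I1 i); case: (I2 i) => //= B4; spec.
    - have := normr_ge0 (a 0 i); lra.
    - lra.
  apply: (relint_from ic2); exists c'; split; last by rewrite mask_mul mc mulmxDl aV addr0.
  move=> i; rewrite !mxE; move: (A3 i); case: (I1 i); case: (I2 i) => //= B3; spec.
  - have := normr_ge0 (a 0 i); have := ler_norm (- a 0 i); rewrite normrN; lra.
  - lra.
- case=> y [r1 r2].
  have [b1 [b1p y1]] := relint_to ic1 r1.
  have [b2 [b2p y2]] := relint_to ic2 r2.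
  have [a aE] : exists a : 'rV[rat]_n, a = mask I2 b2 - mask I1 b1 by exists (mask I2 b2 - mask I1 b1).
  have aV : a *m V = 0 by rewrite aE mulmxBl -!mask_mul -y1 -y2 subrr.
  have [d [d0 [w hw]]] := int_scale (a *m G).
  have wQ : w *m Qm = 0.
    have H : toQ (w *m Qm) = 0.
      by rewrite [LHS]map_mxM -/(toQ w) hw -scalemxAl -mulmxA -/V aV scaler0.
    apply/rowP => j; have := congr1 (fun M : 'M[rat]_(1,k) => M 0 j) H; rewrite !mxE /= => /eqP.
    by rewrite intr_eq0 => /eqP.
  exists w; split; first by move=> f kf; apply: kf.
  have key : forall f, dot f (toQ w) = d * \sum_i a 0 i * dot f (row i G).
    by move=> f; rewrite hw dotZr dot_mulmx.
  have neg : forall f, \sum_i (- a 0 i) * dot f (row i G) = - \sum_i a 0 i * dot f (row i G).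
    by move=> f; rewrite -sumrN; apply: eq_bigr => i _; rewrite mulNr.
  have ha0 : forall i, ~~ I1 i -> ~~ I2 i -> a 0 i = 0.
    move=> i; rewrite aE !mxE; have := b1p i; have := b2p i.
    case: (I1 i); case: (I2 i) => //= *; lra.
  have ha1 : forall i, ~~ I1 i -> 0 <= a 0 i.
    move=> i; rewrite aE !mxE; have := b1p i; have := b2p i.
    case: (I1 i); case: (I2 i) => //= *; lra.
  have ha2 : forall i, ~~ I1 i -> I2 i -> 0 < a 0 i.
    move=> i; rewrite aE !mxE; have := b1p i; have := b2p i.
    case: (I1 i); case: (I2 i) => //= *; lra.
  have hb0 : forall i, ~~ I2 i -> ~~ I1 i -> - a 0 i = 0.
    move=> i; rewrite aE !mxE; have := b1p i; have := b2p i.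
    case: (I1 i); case: (I2 i) => //= *; lra.
  have hb1 : forall i, ~~ I2 i -> 0 <= - a 0 i.
    move=> i; rewrite aE !mxE; have := b1p i; have := b2p i.
    case: (I1 i); case: (I2 i) => //= *; lra.
  have hb2 : forall i, ~~ I2 i -> I1 i -> 0 < - a 0 i.
    move=> i; rewrite aE !mxE; have := b1p i; have := b2p i.
    case: (I1 i); case: (I2 i) => //= *; lra.
  have SL1 : forall f, face_star gamma gamma1 f ->
      0 <= \sum_i a 0 i * dot f (row i G) /\
      (\sum_i a 0 i * dot f (row i G) = 0 <-> forall i, I2 i -> dot f (row i G) = 0).
    move=> f /sc1 [t0 t1].
    exact: (@sign_lemma n I1 I2 (fun i => a 0 i) (fun i => dot f (row i G)) ha0 ha1 ha2 t0 t1).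
  have SL2 : forall f, face_star gamma gamma2 f ->
      0 <= - \sum_i a 0 i * dot f (row i G) /\
      (- \sum_i a 0 i * dot f (row i G) = 0 <-> forall i, I1 i -> dot f (row i G) = 0).
    move=> f /sc2 [t0 t1]; rewrite -neg.
    exact: (@sign_lemma n I2 I1 (fun i => - a 0 i) (fun i => dot f (row i G)) hb0 hb1 hb2 t0 t1).
  have dn : d != 0 by rewrite gt_eqF.
  split; [|split; [|split]].
  + move=> f hf; rewrite key; apply: mulr_ge0; [exact: ltW | exact: (SL1 f hf).1].
  + move=> f hf; rewrite key; apply: mulr_ge0_le0; first exact: ltW.
    by rewrite -oppr_ge0; exact: (SL2 f hf).1.
  + move=> f; split.
      case=> h hf; split=> //; apply/sc2; split; first by case/sc1: hf.
      apply/(SL1 f hf).2; move/eqP: h; rewrite key mulf_eq0 (negPf dn) /=.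
      by move/eqP.
    case=> hf hf2; split=> //; rewrite key.
    by rewrite (proj2 (SL1 f hf).2 (proj2 (proj1 (sc2 f) hf2))) mulr0.
  + move=> f; split.
      case=> h hf; split=> //; apply/sc1; split; first by case/sc2: hf.
      apply/(SL2 f hf).2; move/eqP: h; rewrite key mulf_eq0 (negPf dn) /=.
      by move/eqP => ->; rewrite oppr0.
    case=> hf hf2; split=> //; rewrite key.
    have := proj2 (SL2 f hf2).2 (proj2 (proj1 (sc1 f) hf)).
    by move/eqP; rewrite oppr_eq0 => /eqP ->; rewrite mulr0.
Qed.
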